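(* Let $X$ be an infinite compact metrizable space and $h\colon X\to X$ a minimal homeomorphism. Let $Y\subset X$ be closed with $\mathrm{int}(Y)\neq\varnothing$ and $\partial Y$ topologically $h$-small. For $y\in Y$ let $r(y)=\min\{m\ge1: h^m(y)\in Y\}$; the function $r$ takes only finitely many values, say $n(0)<n(1)<\cdots<n(l)$. For $0\le k\le l$ let $Y_k=\overline{\{y\in Y: r(y)=n(k)\}}$. Then $\partial(h^j(Y_k))$ is thin for all $0\le k\le l$ and $0\le j\le n(k)-1$.
   Context: $\partial A$ is the boundary of $A$. A closed set $F\subset X$ is topologically $h$-small if there is $m\in\mathbb{Z}_{+}$ such that whenever $d(0),\dots,d(m)$ are $m+1$ distinct integers, $h^{d(0)}(F)\cap\cdots\cap h^{d(m)}(F)=\varnothing$. For $F\subset X$ closed and $U\subset X$ open, write $F\prec U$ if there exist $M\in\mathbb{N}$, open sets $U_0,\dots,U_M\subset X$ and integers $d(0),\dots,d(M)$ such that $F\subset\bigcup_{j=0}^M U_j$, $h^{d(j)}(U_j)\subset U$ for all $j$, and the sets $h^{d(j)}(U_j)$ are pairwise disjoint. A closed set $F$ is thin if $F\prec U$ for every non-empty open $U\subset X$. *)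

(* Defs.v *)
From HB Require Import structures.
From mathcomp Require Import all_boot all_order all_algebra.
From mathcomp Require Import all_classical all_reals all_analysis.
Set Implicit Arguments. Unset Strict Implicit. Unset Printing Implicit Defensive.
Import Order.TTheory GRing.Theory Num.Theory.
Local Open Scope classical_set_scope.

Definition hpow {X : Type} (h g : X -> X) (d : int) : X -> X :=
  match d with
  | Posz n => iter n h
  | Negz n => iter n.+1 g
  end.

Definition homeo_with_inv {X : topologicalType} (h g : X -> X) : Prop :=
  continuous h /\ continuous g /\ cancel h g /\ cancel g h.

Definition minimal_homeo {X : topologicalType} (h : X -> X) : Prop :=
  forall Z : set X, closed Z -> h @` Z = Z -> Z = set0 \/ Z = setT.

Definition boundary {X : topologicalType} (A : set X) : set X :=
  closure A `\` interior A.

Definition top_small {X : topologicalType} (h g : X -> X) (F : set X) : Prop :=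
  closed F /\
  exists m : nat, forall d : 'I_m.+1 -> int, injective d ->
    \bigcap_(i in [set: 'I_m.+1]) (hpow h g (d i) @` F) = set0.

Definition prec {X : topologicalType} (h g : X -> X) (F U : set X) : Prop :=
  exists (M : nat) (Us : 'I_M.+1 -> set X) (d : 'I_M.+1 -> int),
    (forall j, open (Us j)) /\
    F `<=` \bigcup_(j in [set: 'I_M.+1]) Us j /\
    (forall j, hpow h g (d j) @` Us j `<=` U) /\
    (forall i j, i != j -> (hpow h g (d i) @` Us i) `&` (hpow h g (d j) @` Us j) = set0).

Definition thin {X : topologicalType} (h g : X -> X) (F : set X) : Prop :=
  closed F /\ forall U : set X, open U -> U !=set0 -> prec h g F U.

Definition first_return {X : Type} (h : X -> X) (Y : set X) (y : X) (n : nat) : Prop :=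
  (1 <= n)%N /\ Y (iter n h y) /\ (forall m, (1 <= m)%N -> (m < n)%N -> ~ Y (iter m h y)).

(* Main.v *)
Require Import Defs.
From HB Require Import structures.
From mathcomp Require Import all_boot all_order all_algebra.
From mathcomp Require Import all_classical all_reals all_analysis.
From mathcomp Require Import zify.
Import Order.TTheory GRing.Theory Num.Theory.
Local Open Scope classical_set_scope.

Section hp.
Context {X : Type} (h g : X -> X) (hK : cancel h g) (gK : cancel g h).
Local Notation hp := (hpow h g).

Lemma hpowS (d : int) x : hp (d + 1)%R x = h (hp d x).
Proof.
case: d => [n|n].
  by have -> : (Posz n + 1 = Posz n.+1)%R by rewrite -addn1 PoszD.
case: n => [|k]; first by rewrite /= gK.
have -> : (Negz k.+1 + 1 = Negz k)%R by rewrite !NegzE; lia.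
by rewrite /= gK.
Qed.

Lemma hpowN (d : int) x : hp (d - 1)%R x = g (hp d x).
Proof. by rewrite -{2}(subrK 1%R d) hpowS hK. Qed.

Lemma hpow_add (a b : int) x : hp (a + b)%R x = hp a (hp b x).
Proof.
case: a => [n|n].
  elim: n => [|n IH]; first by rewrite add0r.
  have -> : (Posz n.+1 + b = (Posz n + b) + 1)%R by lia.
  by rewrite hpowS IH.
elim: n => [|n IH].
  have -> : (Negz 0 + b = b - 1)%R by rewrite NegzE; lia.
  by rewrite hpowN.
have -> : (Negz n.+1 + b = (Negz n + b) - 1)%R by rewrite !NegzE; lia.
by rewrite hpowN IH.
Qed.

Lemma hpowNK (e : int) x : hp (- e)%R (hp e x) = x.
Proof. by rewrite -hpow_add addNr. Qed.
Lemma hpowKN (e : int) x : hp e (hp (- e)%R x) = x.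
Proof. by rewrite -hpow_add addrN. Qed.

Lemma hpow_image (e : int) (S : set X) : hp e @` S = hp (- e)%R @^-1` S.
Proof.
apply/seteqP; split => x /=.
  by case=> y Sy <-; rewrite hpowNK.
by move=> Sx; exists (hp (- e)%R x) => //; rewrite hpowKN.
Qed.
End hp.

Lemma set0P' {T : Type} (A : set T) : (forall y, ~ A y) -> A = set0.
Proof. by move=> H; apply/seteqP; split => y // /H. Qed.

Lemma seq_bound (s : seq int) : exists N : nat, forall e, e \in s -> (`|e| <= N)%N.
Proof.
elim: s => [|a s [N HN]]; first by exists 0%N.
exists (maxn `|a|%N N) => e; rewrite inE => /orP[/eqP->|/HN]; lia.
Qed.

Lemma iter_cancel {T : Type} (f f' : T -> T) n : cancel f f' -> cancel (iter n f) (iter n f').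
Proof.
move=> K; elim: n => [|n IH] x //.
by rewrite iterSr iterS K IH.
Qed.

Section topo.
Context {X : topologicalType} (h g : X -> X) (hg : homeo_with_inv h g).
Local Notation hp := (hpow h g).

Let hc : continuous h. Proof. by case: hg. Qed.
Let gc : continuous g. Proof. by case: hg => _ []. Qed.
Let hK : cancel h g. Proof. by case: hg => _ [_ []]. Qed.
Let gK : cancel g h. Proof. by case: hg => _ [_ []]. Qed.

Lemma iter_cont (f : X -> X) n : continuous f -> continuous (iter n f).
Proof.
move=> fc; elim: n => [|n IH] x /=; first exact: cvg_id.
exact: (continuous_comp (IH x) (fc _)).
Qed.

Lemma hpow_cont e : continuous (hp e).
Proof. by case: e => n; apply: iter_cont. Qed.

Lemma open_pre e S : open S -> open (hp e @^-1` S).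
Proof. by move=> oS; apply: (continuousP _).1 (hpow_cont e) _ oS. Qed.
Lemma closed_pre e S : closed S -> closed (hp e @^-1` S).
Proof. by move=> cS; apply: (continuous_closedP _).1 (hpow_cont e) _ cS. Qed.
Lemma open_img e S : open S -> open (hp e @` S).
Proof. by rewrite (hpow_image _ _ hK gK); apply: open_pre. Qed.
Lemma closed_img e S : closed S -> closed (hp e @` S).
Proof. by rewrite (hpow_image _ _ hK gK); apply: closed_pre. Qed.

Lemma orbit_cover (V : set X) : minimal_homeo h -> open V -> V !=set0 ->
  forall x, exists e : int, V (hp e x).
Proof.
move=> mh oV [v Vv].
pose W := [set x | exists e, V (hp e x)].
have oW : open W.
  have -> : W = \bigcup_(e in [set: int]) (hp e @^-1` V).
    by apply/seteqP; split => x [e]; [exists e | move=> _ ?; exists e].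
  by apply: bigcup_open => e _; apply: open_pre.
have hW : h @` (~` W) = ~` W.
  apply/seteqP; split => x.
  - case=> y nWy <- [e Ve]; apply: nWy; exists (e + 1)%R.
    by rewrite (hpow_add _ _ hK gK).
  - move=> nWx; exists (g x); last by rewrite gK.
    move=> [e Ve]; apply: nWx; exists (e + (-1))%R.
    by rewrite (hpow_add _ _ hK gK).
have cW : closed (~` W) by apply: open_closedC.
case: (mh _ cW hW) => [W0|WT].
- move=> x; apply: contrapT => nx.
  have : (~` W) x by move=> [e Ve]; apply: nx; exists e.
  by rewrite W0.
- exfalso; have : (~` W) v by rewrite WT.
  by apply; exists 0%R.
Qed.

Lemma finite_orbit_cover (O : int -> set X) : compact [set: X] -> (forall e, open (O e)) -> (forall x, exists e, O e x) ->
  exists N : nat, forall x, exists e : int, (`|e| <= N)%N /\ O e x.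
Proof.
move=> cX oO cov.
have := (compact_near_coveringP [set: X]).1 cX nat \oo (fun N x => exists e : int, (`|e| <= N)%N /\ O e x) _.
case.
- move=> x _; have [e Oe] := cov x.
  exists (O e, [set n | (`|e| <= n)%N]) => /=.
    by split; [exact: open_nbhs_nbhs | exists `|e|%N].
  by move=> [a b] [/= ? ?]; exists e.
- move=> N0 _ HN; exists N0 => x; exact: (HN N0 (leqnn _) x I).
Qed.

Lemma return_bound (V : set X) : compact [set: X] -> minimal_homeo h -> open V -> V !=set0 ->
  exists N : nat, forall x, exists2 d : nat, (d <= N)%N & V (iter d h x).
Proof.
move=> cX mh oV V0.
have [N HN] := finite_orbit_cover (fun e => hp e @^-1` V) cX (fun e => open_pre e _ oV)
   (orbit_cover _ mh oV V0).
exists (N + N)%N => x.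
have [e [eN Ve]] := HN (iter N h x).
have Hd : Posz (absz (e + Posz N)%R) = (e + Posz N)%R by lia.
exists (absz (e + Posz N)%R); first lia.
have : V (hp (e + Posz N) x) by rewrite (hpow_add _ _ hK gK).
by rewrite -Hd.
Qed.

Lemma no_isolated (x : X) : compact [set: X] -> minimal_homeo h -> ~ finite_set [set: X] -> ~ open [set x].
Proof.
move=> cX mh inf ox.
have [N HN] := finite_orbit_cover (fun e => hp e @^-1` [set x]) cX (fun e => open_pre e _ ox)
  (orbit_cover _ mh ox (ex_intro _ x erefl)).
apply: inf.
apply: (sub_finite_set _ (finite_image (fun k : nat => hp (- (Posz k - Posz N))%R x) (finite_II (N + N).+1))).
move=> y _; have [e [eN ye]] := HN y.
exists (absz (e + Posz N)%R); first by rewrite /=; lia.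
have -> : (Posz (absz (e + Posz N)%R) - Posz N = e)%R by lia.
by rewrite -ye (hpowNK _ _ hK gK).
Qed.

Lemma split_open (U : set X) : hausdorff_space X -> compact [set: X] -> minimal_homeo h ->
  ~ finite_set [set: X] -> open U -> U !=set0 ->
  exists U1 U2, [/\ open U1, open U2, U1 !=set0 & U2 !=set0] /\ [/\ U1 `<=` U, U2 `<=` U & U1 `&` U2 = set0].
Proof.
move=> hX cX mh inf oU [u Uu].
have [v Uv vu] : exists2 v, U v & v != u.
  apply: contrapT => nv; apply: (no_isolated u cX mh inf).
  suff -> : [set u] = U by [].
  apply/seteqP; split => y; first by move->.
  move=> Uy; apply: contrapT => yu; apply: nv; exists y => //; exact/eqP.
move: hX; rewrite open_hausdorff => /(_ v u vu) [[A B]] /= [Av Bu] [oA oB /eqP AB0].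
rewrite inE in Av; rewrite inE in Bu.
exists (U `&` A), (U `&` B); split; split.
- exact: openI.
- exact: openI.
- by exists v.
- by exists u.
- by move=> y [].
- by move=> y [].
- apply: set0P' => y [[_ Ay] [_ By]].
  by have : (A `&` B) y by [] ; rewrite AB0.
Qed.

Definition good (U : set X) (I : finType) (O : I -> set X) (d : I -> int) :=
  [/\ forall i, open (O i), forall i, hp (d i) @` O i `<=` U &
      forall i j, i != j -> hp (d i) @` O i `&` hp (d j) @` O j = set0].
Arguments good U {I} O d.

Definition precF (F U : set X) := exists (I : finType) (O : I -> set X) (d : I -> int),
  good U O d /\ F `<=` \bigcup_(i in [set: I]) O i.

Definition thinp (F : set X) := forall U, open U -> U !=set0 -> precF F U.

Lemma precF_prec F U : precF F U -> prec h g F U.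
Proof.
case=> J [Oc [dd [[oO sO dO] FO]]].
pose n := #|J|.
pose O' (j : 'I_n.+1) : set X :=
  if (insub (val j) : option 'I_n) is Some k then Oc (enum_val k) else set0.
pose d' (j : 'I_n.+1) : int :=
  if (insub (val j) : option 'I_n) is Some k then dd (enum_val k) else 0%R.
exists n, O', d'; split; [|split; [|split]].
- move=> j; rewrite /O'; case: insubP => [k _ _|_]; [exact: oO | exact: open0].
- move=> x /FO [i _ Oix].
  exists (widen_ord (leqnSn n) (enum_rank i)) => //.
  rewrite /O' /=; case: insubP => [k _ kv|]; last by rewrite ltn_ord.
  have -> : k = enum_rank i by apply/val_inj.
  by rewrite enum_rankK.
- move=> j; rewrite /O' /d'; case: insubP => [k _ _|_]; first exact: sO.
  by move=> y [z].
- move=> i j ij; rewrite /O' /d'.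
  case: insubP => [k _ ki|_]; last by apply: set0P' => y [[z]].
  case: insubP => [k' _ kj|_]; last by apply: set0P' => y [_ [z]].
  apply: dO; apply/negP => /eqP /enum_val_inj kk.
  by move: ij; rewrite -(inj_eq val_inj) -ki -kj kk eqxx.
Qed.

Lemma precF0 U : precF set0 U.
Proof.
exists void, (fun v : void => match v with end), (fun v : void => match v with end).
by split => //; split; case.
Qed.

Lemma good_mono U U' I O d : U `<=` U' -> @good U I O d -> @good U' I O d.
Proof. by move=> UU [oO sO dO]; split => // i; apply: subset_trans (sO i) UU. Qed.

Lemma precF_mono F F' U U' : F' `<=` F -> U `<=` U' -> precF F U -> precF F' U'.
Proof.
move=> FF UU [J [Oc [dd [gd FO]]]]; exists J, Oc, dd; split.
  exact: good_mono gd.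
exact: subset_trans FO.
Qed.

Lemma thinp_sub F F' : F' `<=` F -> thinp F -> thinp F'.
Proof. by move=> FF tF U oU U0; apply: precF_mono FF _ (tF U oU U0). Qed.

Lemma good_cat U1 U2 I1 I2 O1 O2 d1 d2 : @good U1 I1 O1 d1 -> @good U2 I2 O2 d2 ->
  U1 `&` U2 = set0 ->
  good (U1 `|` U2) (fun i : (I1 + I2)%type => match i with inl a => O1 a | inr b => O2 b end)
                   (fun i => match i with inl a => d1 a | inr b => d2 b end).
Proof.
move=> [oO1 sO1 dO1] [oO2 sO2 dO2] U12; split.
- by case.
- by case=> a y Hy; [left; exact: sO1 Hy | right; exact: sO2 Hy].
- case=> a; case=> b ab.
  + by apply: dO1; apply: contra ab => /eqP ->.
  + apply: set0P' => y [/sO1 y1 /sO2 y2].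
    by have : (U1 `&` U2) y by []; rewrite U12.
  + apply: set0P' => y [/sO2 y2 /sO1 y1].
    by have : (U1 `&` U2) y by []; rewrite U12.
  + by apply: dO2; apply: contra ab => /eqP ->.
Qed.

Lemma precF_cat F U1 U2 I1 I2 O1 O2 d1 d2 : @good U1 I1 O1 d1 -> @good U2 I2 O2 d2 ->
  U1 `&` U2 = set0 ->
  F `<=` \bigcup_(i in [set: I1]) O1 i `|` \bigcup_(i in [set: I2]) O2 i ->
  precF F (U1 `|` U2).
Proof.
move=> g1 g2 U12 FO.
exists (I1 + I2)%type,
  (fun i : (I1 + I2)%type => match i with inl a => O1 a | inr b => O2 b end),
  (fun i => match i with inl a => d1 a | inr b => d2 b end).
split; first exact: good_cat g1 g2 U12.
move=> x /FO [[i _ Oi]|[i _ Oi]]; [by exists (inl i) | by exists (inr i)].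
Qed.

Lemma thinp_union F1 F2 : hausdorff_space X -> compact [set: X] -> minimal_homeo h ->
  ~ finite_set [set: X] -> thinp F1 -> thinp F2 -> thinp (F1 `|` F2).
Proof.
move=> hX cX mh inf t1 t2 U oU U0.
have [U1 [U2 [[oU1 oU2 U10 U20] [U1U U2U U12]]]] := split_open _ hX cX mh inf oU U0.
have [J1 [P1 [d1 [g1 F1O]]]] := t1 U1 oU1 U10.
have [J2 [P2 [d2 [g2 F2O]]]] := t2 U2 oU2 U20.
apply: (precF_mono (F1 `|` F2) (F1 `|` F2) (U1 `|` U2) U) => //.
  by move=> y [/U1U|/U2U].
apply: precF_cat g1 g2 U12 _.
by move=> x [/F1O|/F2O]; [left|right].
Qed.

Lemma thinp_shift e F : thinp F -> thinp (hp e @` F).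
Proof.
move=> tF U oU U0; have [J [Oc [dd [[oO sO dO] FO]]]] := tF U oU U0.
have E : forall k, hp (dd k - e)%R @` (hp e @` Oc k) = hp (dd k) @` Oc k.
  move=> k; apply/seteqP; split => y.
  + by case=> z [w Ow <-] <-; exists w => //; rewrite -(hpow_add _ _ hK gK) subrK.
  + case=> w Ow <-; exists (hp e w); first by exists w.
    by rewrite -(hpow_add _ _ hK gK) subrK.
exists J, (fun i => hp e @` Oc i), (fun i => dd i - e)%R; split; [split|].
- by move=> i; apply: open_img.
- by move=> i; rewrite E.
- by move=> i j ij; rewrite !E; apply: dO.
- move=> x [y Fy <-]; have [i _ Oiy] := FO y Fy; exists i => //; by exists y.
Qed.

Lemma sep_one F k : hausdorff_space X -> compact [set: X] -> closed F ->
  (forall b, F b -> ~ F (iter k h b)) ->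
  exists W, [/\ open W, F `<=` W & forall b, W b -> ~ W (iter k h b)].
Proof.
move=> hX cX cF sF.
pose K := hp (Posz k) @` F.
have cK : closed K by exact: closed_img.
have nb : set_nbhs F (~` K).
  apply/set_nbhsP; exists (~` K); split => //; first exact: closed_openC.
  move=> b Fb [c Fc cb]; apply: (sF c Fc).
  by change (F (hp (Posz k) c)); rewrite cb.
have [C nC clC] := compact_normal hX cX cF nb.
have [C' [oC' FC' C'C]] := (set_nbhsP _ _).1 nC.
exists (C' `&` hp (Posz k) @^-1` (~` closure C')); split.
- apply: openI => //; apply: open_pre; exact/closed_openC/closed_closure.
- move=> b Fb; split; first exact: FC'.
  move=> /= clb; have Kb : K (iter k h b) by exists b.
  exact: (clC _ (@closureS _ C' C C'C _ clb) Kb).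
- move=> b [_ nb'] [C'k _]; apply: nb'; exact: subset_closure.
Qed.

Lemma sep_nbhd F N : hausdorff_space X -> compact [set: X] -> closed F ->
  (forall k, (0 < k <= N)%N -> forall b, F b -> ~ F (iter k h b)) ->
  exists W, [/\ open W, F `<=` W & forall k, (0 < k <= N)%N -> forall b, W b -> ~ W (iter k h b)].
Proof.
move=> hX cX cF; elim: N => [|N IH] sF.
  by exists setT; split => // [|k kN]; [exact: openT | exfalso; lia].
have [W1 [oW1 FW1 s1]] : exists W, [/\ open W, F `<=` W &
    forall k, (0 < k <= N)%N -> forall b, W b -> ~ W (iter k h b)].
  by apply: IH => k kN; apply: sF; lia.
have k1 : (0 < N.+1 <= N.+1)%N by rewrite leqnn.
have [W2 [oW2 FW2 s2]] := sep_one _ _ hX cX cF (sF N.+1 k1).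
exists (W1 `&` W2); split; first exact: openI.
  by move=> x Fx; split; [exact: FW1 | exact: FW2].
move=> k kN b [W1b W2b] [W1k W2k].
have [ek|kN1] := eqVneq k N.+1; first by subst k; exact: s2 W2b W2k.
apply: (s1 k _ b W1b W1k); lia.
Qed.

Lemma sep_prec (W F V : set X) N : open W -> F `<=` W -> open V ->
  (forall x, exists2 d : nat, (d <= N)%N & V (iter d h x)) ->
  (forall k : nat, (0 < k <= N)%N -> forall b, W b -> ~ W (iter k h b)) ->
  precF F V.
Proof.
move=> oW FW oV HV Wsep.
have HH : forall (i j : 'I_N.+1) a b, (i < j)%N -> W a -> W b ->
    iter i h a = iter j h b -> False.
  move=> i j a b lij Wa Wb e.
  have e' : a = iter (j - i) h b.
    apply: (can_inj (iter_cancel _ _ i hK)); rewrite e -iterD subnKC //; exact: ltnW.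
  apply: (Wsep (j - i)%N _ b Wb); last by rewrite -e'.
  apply/andP; split; first by rewrite subn_gt0.
  have := ltn_ord j; lia.
exists 'I_N.+1, (fun d : 'I_N.+1 => W `&` hp (Posz d) @^-1` V), (fun d : 'I_N.+1 => Posz d).
split; [split|].
- by move=> d; apply: openI => //; apply: open_pre.
- by move=> d y [z [_ Vz] <-].
- move=> i j ij; apply: set0P' => y [[a [Wa _] ya] [b [Wb _] yb]].
  rewrite -yb in ya.
  case: (ltngtP i j) => [lij|lji|eij].
  + exact: HH lij Wa Wb ya.
  + exact: HH lji Wb Wa (esym ya).
  + by move: ij; rewrite (val_inj eij) eqxx.
- move=> x Fx; have [d dN Vd] := HV x.
  by exists (Ordinal (dN : (d < N.+1)%N)) => //; split; [exact: FW | exact: Vd].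
Qed.

Definition par m (F : set X) := forall d : 'I_m.+1 -> int, injective d ->
    \bigcap_(i in [set: 'I_m.+1]) (hp (d i) @` F) = set0.

Lemma par_step m F k : (0 < k)%N -> par m.+1 F -> par m (F `&` hp (Posz k) @` F).
Proof.
move=> k0 pF d dI; apply: set0P' => x Hx.
case: (@arg_maxP _ _ _ (ord0 : 'I_m.+1) xpredT d isT) => i0 _ Hmax.
pose d' (j : 'I_m.+2) : int :=
  if unlift ord_max j is Some j' then d j' else (d i0 + Posz k)%R.
have d'I : injective d'.
  move=> a b; rewrite /d'.
  case: (unliftP ord_max a) => [a' ea|ea]; case: (unliftP ord_max b) => [b' eb|eb]; subst.
  - by move=> e; rewrite (dI _ _ e).
  - by move=> e; have := Hmax a' isT; rewrite e; lia.
  - by move=> e; have := Hmax b' isT; rewrite -e; lia.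
  - by [].
have : (\bigcap_(j in [set: 'I_m.+2]) hp (d' j) @` F) x.
  move=> j _; rewrite /d'; case: (unliftP ord_max j) => [j' _|_].
  - by have [y [Fy _] <-] := Hx j' I; exists y.
  - have [y [_ [z Fz <-]] <-] := Hx i0 I; exists z => //.
    by rewrite (hpow_add _ _ hK gK).
by rewrite (pF d' d'I).
Qed.

Lemma par_thin m : hausdorff_space X -> compact [set: X] -> minimal_homeo h ->
  ~ finite_set [set: X] -> forall F, closed F -> par m F -> thinp F.
Proof.
move=> hX cX mh inf; elim: m => [|m IH] F cF pF.
  have inj0 : injective (fun _ : 'I_1 => 0%R : int).
    by move=> a b _; rewrite (ord1 a) (ord1 b).
  have F0 : F = set0.
    apply: set0P' => x Fx.
    have : (\bigcap_(j in [set: 'I_1]) hp ((fun _ : 'I_1 => 0%R : int) j) @` F) x.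
      by move=> j _; exists x.
    by rewrite (pF _ inj0).
  by rewrite F0 => U _ _; apply: precF0.
move=> U oU U0.
have [U1 [U2 [[oU1 oU2 U10 U20] [U1U U2U U12]]]] := split_open _ hX cX mh inf oU U0.
have [N HN] := return_bound _ cX mh oU2 U20.
pose B := [set x | F x /\ exists2 k : nat, (0 < k <= N)%N & (hp (Posz k) @` F) x].
have tk : forall k, (0 < k)%N -> thinp (F `&` hp (Posz k) @` F).
  move=> k k0; apply: IH; first exact: closedI cF (closed_img _ _ cF).
  exact: par_step.
have tBn : forall N', thinp [set x | F x /\ exists2 k : nat, (0 < k <= N')%N & (hp (Posz k) @` F) x].
  elim=> [|N' IHN].
    apply: (thinp_sub set0); first by move=> x [_ [k kN _]] /=; lia.
    by move=> U' _ _; exact: precF0.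
  apply: (thinp_sub ([set x | F x /\ exists2 k : nat, (0 < k <= N')%N & (hp (Posz k) @` F) x]
     `|` (F `&` hp (Posz N'.+1) @` F))).
    move=> x [Fx [k kN Hk]]; have [ek|kN'] := eqVneq k N'.+1.
      by subst k; right.
    by left; split => //; exists k => //; lia.
  by apply: thinp_union => //; exact: tk.
have tB : thinp B := tBn N.
have [J [Oc [dd [gd BO]]]] := tB U1 oU1 U10.
pose F' := F `&` ~` \bigcup_(i in [set: J]) Oc i.
have cF' : closed F'.
  apply: (closedI cF); apply: open_closedC; apply: bigcup_open => i _; by case: gd.
have sF' : forall k, (0 < k <= N)%N -> forall b, F' b -> ~ F' (iter k h b).
  move=> k kN b [Fb _] [Fk nO]; apply: nO; apply: BO; split => //.
  by exists k => //; exists b.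
have [W [oW F'W Wsep]] := sep_nbhd _ _ hX cX cF' sF'.
have [J2 [P2 [d2 [g2 F'P2]]]] := sep_prec _ _ _ _ oW F'W oU2 HN Wsep.
apply: (precF_mono F F (U1 `|` U2) U) => //.
  by move=> y [/U1U|/U2U].
apply: precF_cat gd g2 U12 _.
move=> x Fx; have [[i _ Oi]|nO] := pselect ((\bigcup_(i in [set: J]) Oc i) x).
  by left; exists i.
by right; apply: F'P2; split.
Qed.
End topo.
Lemma first_return_ex (T : Type) (f : T -> T) (Y : set T) y m : (1 <= m)%N -> Y (iter m f y) ->
  exists2 n, (n <= m)%N & first_return f Y y n.
Proof.
move=> m1 Ym.
have ex : exists n, (0 < n)%N && `[< Y (iter n f y) >].
  by exists m; rewrite m1; apply/asboolP.
case: (ex_minnP ex) => n /andP[n0 /asboolP Yn] nmin.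
exists n; first by apply: nmin; rewrite m1; apply/asboolP.
split => //; split => // k k1 kn Yk.
have := nmin k; rewrite k1 /=.
have -> : `[< Y (iter k f y) >] = true by apply/asboolP.
by move=> /(_ isT); lia.
Qed.

Lemma fr_unique (T : Type) (f : T -> T) (Y : set T) y n1 n2 :
  first_return f Y y n1 -> first_return f Y y n2 -> n1 = n2.
Proof.
move=> [a1 [b1 c1]] [a2 [b2 c2]].
case: (ltngtP n1 n2) => // lt; [exact: (False_ind _ (c2 n1 a1 lt b1)) | exact: (False_ind _ (c1 n2 a2 lt b2))].
Qed.

Lemma closed_forall_lt {T : topologicalType} (P : nat -> set T) n : (forall m, closed (P m)) ->
  closed [set z | forall m, (m < n)%N -> P m z].
Proof.
move=> cP; elim: n => [|n IH].
  have -> : [set z : T | forall m, (m < 0)%N -> P m z] = setT by apply/seteqP; split.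
  exact: closedT.
have -> : [set z | forall m, (m < n.+1)%N -> P m z] = [set z | forall m, (m < n)%N -> P m z] `&` P n.
  apply/seteqP; split => z.
  - by move=> H; split; [move=> m mn; apply: H; lia | apply: H].
  - move=> [H Pn] m; rewrite ltnS leq_eqVlt => /orP[/eqP->//|]; exact: H.
exact: closedI.
Qed.

Lemma open_forall_lt {T : topologicalType} (P : nat -> set T) n : (forall m, open (P m)) ->
  open [set z | forall m, (m < n)%N -> P m z].
Proof.
move=> cP; elim: n => [|n IH].
  have -> : [set z : T | forall m, (m < 0)%N -> P m z] = setT by apply/seteqP; split.
  exact: openT.
have -> : [set z | forall m, (m < n.+1)%N -> P m z] = [set z | forall m, (m < n)%N -> P m z] `&` P n.
  apply/seteqP; split => z.
  - by move=> H; split; [move=> m mn; apply: H; lia | apply: H].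
  - move=> [H Pn] m; rewrite ltnS leq_eqVlt => /orP[/eqP->//|]; exact: H.
exact: openI.
Qed.
Theorem lemma5p5 (R : realType) (X : pseudoMetricType R) (h g : X -> X) (Y : set X) :
  hausdorff_space X -> compact [set: X] -> ~ finite_set [set: X] ->
  homeo_with_inv h g -> minimal_homeo h ->
  closed Y -> interior Y !=set0 -> top_small h g (boundary Y) ->
  (forall y, Y y -> exists n, first_return h Y y n) /\
  finite_set [set n | exists2 y, Y y & first_return h Y y n] /\
  (forall n : nat, (exists2 y, Y y & first_return h Y y n) ->
     forall j : nat, (j < n)%N ->
       thin h g (boundary (iter j h @` closure [set y | Y y /\ first_return h Y y n]))).
Proof.
move=> hX cX inf hg mh cY iY tY.
have [hc [gc [hK gK]]] := hg.
have [N HN] := return_bound h g hg _ cX mh (@open_interior _ Y) iY.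
have ret : forall y, exists2 m, (1 <= m <= N.+1)%N & Y (iter m h y).
  move=> y; have [d dN Yd] := HN (h y).
  exists d.+1; first lia.
  by rewrite iterSr; apply: interior_subset.
have part1 : forall y, Y y -> exists n, first_return h Y y n.
  move=> y _; have [m /andP[m1 _] Ym] := ret y.
  by have [n _ fr] := first_return_ex _ _ _ _ _ m1 Ym; exists n.
have bnd : forall y n, first_return h Y y n -> (n <= N.+1)%N.
  move=> y n fr; have [m /andP[m1 mN] Ym] := ret y.
  have [n' n'm fr'] := first_return_ex _ _ _ _ _ m1 Ym.
  by rewrite (fr_unique _ _ _ _ _ _ fr fr'); exact: leq_trans n'm mN.
split => //; split.
  apply: (sub_finite_set _ (finite_II N.+2)) => n [y _ fr] /=.
  by have := bnd y n fr; lia.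
move=> n [y0 Yy0 fr0] j jn.
have n1 : (1 <= n)%N by case: fr0.
pose E := [set y | Y y /\ first_return h Y y n].
pose hp := hpow h g.
have tbY : thinp h g (boundary Y).
  have [cbY [mY pY]] := tY.
  exact: (par_thin h g hg mY hX cX mh inf _ cbY pY).
pose S n' := [set x | exists2 m : nat, (m <= n')%N &
   (hpow h g (Posz j - Posz m)%R @` boundary Y) x].
have tS : forall n', thinp h g (S n').
  elim=> [|n' IHn].
    apply: (thinp_sub h g (hpow h g (Posz j - Posz 0)%R @` boundary Y)).
      by move=> x [m]; rewrite leqn0 => /eqP ->.
    exact: thinp_shift.
  apply: (thinp_sub h g (S n' `|` hpow h g (Posz j - Posz n'.+1)%R @` boundary Y)).
    move=> x [m mn Hx]; have [em|mn'] := eqVneq m n'.+1.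
      by subst m; right.
    by left; exists m => //; lia.
  by apply: thinp_union => //; exact: thinp_shift.
pose C := Y `&` hp (Posz n) @^-1` Y `&`
  [set z | forall m, (m < n.-1)%N -> (hp (Posz m.+1) @^-1` closure (~` Y)) z].
pose G := interior Y `&` hp (Posz n) @^-1` interior Y `&`
  [set z | forall m, (m < n.-1)%N -> (hp (Posz m.+1) @^-1` (~` Y)) z].
have cC : closed C.
  apply: closedI; first by apply: closedI; [exact: cY | exact: (closed_pre h g hg _ _ cY)].
  by apply: closed_forall_lt => m; apply: (closed_pre h g hg); exact: closed_closure.
have oG : open G.
  apply: openI.
    by apply: openI; [exact: open_interior | exact: (open_pre h g hg _ _ (@open_interior _ Y))].
  by apply: open_forall_lt => m; apply: (open_pre h g hg); exact: closed_openC.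
have EC : E `<=` C.
  move=> y [Yy [_ [Yn nomid]]]; split; first by split.
  move=> m mn; apply: subset_closure => Ym; apply: (nomid m.+1) => //; lia.
have GE : G `<=` E.
  move=> z [[iz inz] G3]; split; first exact: interior_subset.
  split => //; split; first exact: interior_subset.
  move=> k k1 kn; have kk : (k.-1 < n.-1)%N by lia.
  have := G3 _ kk; rewrite prednK //.
pose A := iter j h @` closure E.
have clEC : closure E `<=` C.
  by rewrite [X in _ `<=` X]((closure_id C).1 cC); exact: closureS.
have AC : A `<=` hp (Posz j) @` C.
  by move=> x [y Ey <-]; exists y => //; exact: clEC.
have clA : closure A `<=` hp (Posz j) @` C.
  rewrite [X in _ `<=` X]((closure_id _).1 (closed_img h g hg (Posz j) _ cC)).
  exact: closureS AC.
have GA : hp (Posz j) @` G `<=` interior A.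
  rewrite -open_subsetE; last exact: open_img.
  move=> x [z Gz <-]; exists z => //; apply: subset_closure; exact: GE.
have ciY : forall w, closure (~` Y) w -> ~ interior Y w.
  move=> w cw; have := interiorC (~` Y); rewrite setCK => ->.
  by apply.
have key : boundary A `<=` S n.
  move=> x [clx nix].
  have [z [[Yz Ynz] C3] xz] := clA _ clx.
  have nGz : ~ G z by move=> Gz; apply: nix; apply: GA; exists z.
  have bd : forall w, Y w -> ~ interior Y w -> boundary Y w.
    by move=> w Yw niw; split => //; exact: subset_closure.
  have [m mn bm] : exists2 m, (m <= n)%N & boundary Y (iter m h z).
    case: (pselect (interior Y z)) => iz; last by exists 0%N => //; exact: bd.
    case: (pselect (interior Y (iter n h z))) => inz; last by exists n => //; exact: bd.
    have [m mn Ym] : exists2 m, (m < n.-1)%N & Y (iter m.+1 h z).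
      apply: contrapT => H; apply: nGz; split; first by split.
      by move=> m mn Ym; apply: H; exists m.
    exists m.+1; first lia.
    by apply: bd => //; apply: ciY; exact: (C3 m mn).
  exists m => //; exists (iter m h z) => //.
  rewrite -xz; change (iter m h z) with (hpow h g (Posz m) z).
  by rewrite -(hpow_add h g hK gK) subrK.
split.
  rewrite /boundary setDE; apply: closedI; first exact: closed_closure.
  by apply: open_closedC; exact: open_interior.
move=> U oU U0; apply: precF_prec.
exact: (precF_mono h g (S n) _ U U key (fun _ u => u) (tS n U oU U0)).
Qed.
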